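(* For $n\ge 1$ and all $k\ge 0$, $$P^+(n+1,k)=(n-2k)S(n,k),\qquad P^-(n+1,k)=(1+k)S(n,k).$$ Equivalently, $P_{n+1}^+(x)=nS_n(x)-2xS_n'(x)$ and $P_{n+1}^-(x)=S_n(x)+xS_n'(x)$.
   Context: For a permutation $\pi$ of $[n]=\{1,\dots,n\}$, ${\rm des}(\pi)=\#\{i\in[n-1]:\pi(i)>\pi(i+1)\}$. A double descent is an index $i\in[n-2]$ with $\pi(i)>\pi(i+1)>\pi(i+2)$; $\pi$ is simsun if for every $k\in[n]$ the subword of $\pi$ consisting of the letters in $[k]$ (in order of appearance) has no double descents. Let $\mathcal{RS}_n$ be the set of simsun permutations of $[n]$, $S(n,k)=\#\{\pi\in\mathcal{RS}_n:{\rm des}(\pi)=k\}$, $S_n(x)=\sum_kS(n,k)x^k$. Let $\mathcal{RS}_n^+=\{\pi\in\mathcal{RS}_n:\pi(1)>\pi(2)\}$ and $\mathcal{RS}_n^-=\{\pi\in\mathcal{RS}_n:\pi(1)<\pi(2)\}$. An interior peak of $\pi$ is an index $i\in\{2,\dots,n-1\}$ with $\pi(i-1)<\pi(i)>\pi(i+1)$, and ${\rm pk}(\pi)$ is their number. Let $P^{\pm}(n,k)=\#\{\pi\in\mathcal{RS}_n^{\pm}:{\rm pk}(\pi)=k\}$ and $P_n^{\pm}(x)=\sum_k P^{\pm}(n,k)x^k$. *)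

(* Defs.v *)
From mathcomp Require Import all_boot all_order all_fingroup all_algebra.
Set Implicit Arguments. Unset Strict Implicit. Unset Printing Implicit Defensive.

(* Permutations of [n] are modelled as {perm 'I_n}; the letter i+1 of the
   paper is the ordinal i (everything is shifted by one, which does not
   affect descents, peaks or the simsun property). *)

Definition word n (p : {perm 'I_n}) : seq nat := [seq val (p i) | i <- enum 'I_n].

Definition des_seq (s : seq nat) : nat :=
  \sum_(i < (size s).-1) (nth 0 s i > nth 0 s i.+1).

Definition has_ddes (s : seq nat) : bool :=
  [exists i : 'I_(size s).-2, (nth 0 s i > nth 0 s i.+1) && (nth 0 s i.+1 > nth 0 s i.+2)].

Definition pk_seq (s : seq nat) : nat :=
  \sum_(i < (size s).-2) ((nth 0 s i < nth 0 s i.+1) && (nth 0 s i.+1 > nth 0 s i.+2)).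

Definition des n (p : {perm 'I_n}) : nat := des_seq (word p).
Definition pk n (p : {perm 'I_n}) : nat := pk_seq (word p).

(* simsun: for every k in [n], the subword of letters in [k] has no double
   descents (letters in [k] are, after the shift, the values < k) *)
Definition simsun n (p : {perm 'I_n}) : bool :=
  [forall k : 'I_n, ~~ has_ddes [seq v <- word p | v < k.+1]].

Definition Snk (n k : nat) : nat := #|[set p : {perm 'I_n} | simsun p && (des p == k)]|.

Definition first_des n (p : {perm 'I_n}) : bool := nth 0 (word p) 0 > nth 0 (word p) 1.
Definition first_asc n (p : {perm 'I_n}) : bool := nth 0 (word p) 0 < nth 0 (word p) 1.

Definition Pplus (n k : nat) : nat :=
  #|[set p : {perm 'I_n} | [&& simsun p, first_des p & pk p == k]]|.
Definition Pminus (n k : nat) : nat :=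
  #|[set p : {perm 'I_n} | [&& simsun p, first_asc p & pk p == k]]|.

(* Main.v *)
Require Import Defs.
From mathcomp Require Import all_boot all_order all_fingroup all_algebra.
From mathcomp Require Import zify.


Lemma des_nil : des_seq [::] = 0. Proof. by rewrite /des_seq big_ord0. Qed.
Lemma des_1 a : des_seq [:: a] = 0. Proof. by rewrite /des_seq big_ord0. Qed.
Lemma des_cons2 a b r : des_seq [:: a, b & r] = (b < a) + des_seq (b :: r).
Proof. by rewrite /des_seq /= big_ord_recl. Qed.

Lemma pk_small s : size s <= 2 -> pk_seq s = 0.
Proof. by case: s => [|a [|b [|c r]]] //= _; rewrite /pk_seq big_ord0. Qed.
Lemma pk_cons3 a b c r : pk_seq [:: a, b, c & r] = ((a < b) && (c < b)) + pk_seq [:: b, c & r].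
Proof. by rewrite /pk_seq /= big_ord_recl. Qed.

Lemma dd_small s : size s <= 2 -> has_ddes s = false.
Proof.
by case: s => [|a [|b [|c r]]] //= _; rewrite /has_ddes; apply/existsP => -[[]].
Qed.
Lemma dd_cons3 a b c r : has_ddes [:: a, b, c & r] = ((b < a) && (c < b)) || has_ddes [:: b, c & r].
Proof.
rewrite /has_ddes /=; apply/existsP/orP.
- case=> -[[|i] Hi] /= H; first by left.
  by right; apply/existsP; exists (Ordinal (Hi : i < size r)).
- case=> [H|/existsP [i H]]; first by exists ord0.
  by exists (lift ord0 i).
Qed.


Definition ins (j x : nat) (t : seq nat) := take j t ++ x :: drop j t.
Definition fdl (s : seq nat) := if s is a :: b :: _ then b < a else false.

Lemma gtF {a b} : a < b -> (b < a) = false.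
Proof. by move=> h; rewrite ltnNge ltnW. Qed.

Lemma ins0 x t : ins 0 x t = x :: t. Proof. by rewrite /ins take0 drop0. Qed.
Lemma insS j x a t : ins j.+1 x (a :: t) = a :: ins j x t. Proof. by []. Qed.
Lemma ins_nil j x : ins j x [::] = [:: x]. Proof. by case: j. Qed.

Lemma perm_ins j x t : perm_eq (ins j x t) (x :: t).
Proof.
apply/seq.permP => p; rewrite /ins count_cat /= -{3}(cat_take_drop j t) count_cat.
by rewrite addnCA.
Qed.

Lemma uniq_ins j x t : x \notin t -> uniq t -> uniq (ins j x t).
Proof. by move=> Hx Hu; rewrite (perm_uniq (perm_ins j x t)) /= Hx. Qed.

Lemma des_ins x t j : all (fun v => v < x) t ->
  des_seq (ins j x t) = des_seq t \/ des_seq (ins j x t) = (des_seq t).+1.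
Proof.
elim: t j => [|a t IH] j /=.
  by rewrite ins_nil des_nil des_1; left.
case/andP=> ax Ht; case: j => [|j].
  by rewrite ins0 des_cons2 ax; right.
rewrite insS; case: t IH Ht => [|b r] IH Ht.
  by rewrite ins_nil des_cons2 !des_1 gtF //; left.
case: j => [|j].
  rewrite ins0 !des_cons2 gtF //=.
  by case/andP: Ht => -> _; case: (b < a); [left|right].
rewrite insS !des_cons2.
have := IH j.+1 Ht; rewrite insS => -[->|->]; [left|right]; lia.
Qed.

Lemma pk_des s : uniq s -> ~~ has_ddes s -> pk_seq s + fdl s = des_seq s.
Proof.
elim: s => [|a s IH]; first by rewrite pk_small // des_nil.
case: s IH => [|b s] IH; first by rewrite pk_small // des_1.
case: s IH => [|c s] IH.
  by rewrite pk_small // des_cons2 des_1 /= addn0.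
rewrite pk_cons3 des_cons2 dd_cons3 negb_or => /andP[Ha Hu] /andP[H1 H2].
have := IH Hu H2; rewrite /= => <-.
move: Ha H1; rewrite !inE negb_or => /andP[/eqP Hab _].
case: (ltngtP a b) => //= Hab'; case: (c < b) => //=; lia.
Qed.

Section X.
Variable x : nat.

Definition N e t := \sum_(j < size t)
  (~~ has_ddes (ins j.+1 x t) && (des_seq (ins j.+1 x t) == des_seq t + e)).

Lemma dd_shift a b r j : all (fun v => v < x) [:: a, b & r] -> ~~ has_ddes [:: a, b & r] ->
  has_ddes [:: a, b & ins j x r] = has_ddes (b :: ins j x r).
Proof.
move=> /= /and3P[ax bx rx] Hd.
case: r rx Hd => [|c r] rx Hd.
  by rewrite ins_nil dd_cons3 (gtF bx) andbF.
case: j => [|j].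
  by rewrite ins0 dd_cons3 (gtF bx) andbF.
rewrite insS dd_cons3; move: Hd; rewrite dd_cons3 negb_or => /andP[/negbTE -> _].
by [].
Qed.

Lemma N_cons e a b r : all (fun v => v < x) [:: a, b & r] -> ~~ has_ddes [:: a, b & r] ->
  N e [:: a, b & r] =
  (~~ has_ddes [:: a, x, b & r] && (des_seq [:: a, x, b & r] == des_seq [:: a, b & r] + e))
  + N e (b :: r).
Proof.
move=> Hx Hd; rewrite /N /= big_ord_recl; congr (_ + _).
apply: eq_bigr => j _; rewrite /bump /= !insS (@dd_shift _ _ _ j Hx Hd) !des_cons2.
by rewrite -addnA eqn_add2l.
Qed.

Lemma ddx {b r} : all (fun v => v < x) (b :: r) -> ~~ has_ddes (b :: r) ->
  has_ddes [:: x, b & r] = fdl (b :: r).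
Proof.
move=> /= /andP[bx _]; case: r => [|c r] Hd; first by rewrite dd_small.
by rewrite dd_cons3 bx (negbTE Hd) orbF.
Qed.

Lemma N_closed t : t != [::] -> all (fun v => v < x) t -> ~~ has_ddes t ->
  N 0 t = (des_seq t).+1 /\ N 1 t + ~~ fdl t + 2 * des_seq t = size t.
Proof.
elim: t => [|a t IH] // _.
case: t IH => [|b r] IH.
  move=> /= /andP[ax _] _; rewrite /N !big_ord1 /= !insS ins_nil des_cons2 !des_1 dd_small // gtF //.

move=> Hx Hd; rewrite !N_cons //.
have Hx' : all (fun v => v < x) (b :: r) by case/andP: Hx.
have Hd' : ~~ has_ddes (b :: r).
  case: r Hx Hd {IH Hx'} => [|c r] _; first by rewrite (@dd_small [:: b]).
  by rewrite dd_cons3 negb_or => /andP[].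
have [IH0 IH1] := IH isT Hx' Hd'.
have ax : a < x by case/andP: Hx.
rewrite dd_cons3 (gtF ax) /= (ddx Hx' Hd') !des_cons2 (gtF ax) /=.
rewrite (_ : b < x) ?IH0; last by case/and3P: Hx.
have Hab : b < a -> ~~ fdl (b :: r).
  case: r Hd {IH IH0 IH1 Hx Hx' Hd'} => [|c r] //=.
  rewrite dd_cons3 negb_or => /andP[H _] ba; apply/negP => cb.
  by rewrite ba cb in H.
move: IH1 Hab; rewrite /=.
case: (b < a); case: (fdl (b :: r)) => //= H1 H2; split; lia.
Qed.
End X.


Lemma sum3 (F : nat -> nat) m : \sum_(j < m.+3) F j = F 0 + F 1 + \sum_(j < m.+1) F j.+2.
Proof. by rewrite !big_ord_recl addnA. Qed.

Section Y.
Variable x : nat.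

Definition Tp k t := \sum_(j < (size t).+1)
  [&& ~~ has_ddes (ins j x t), fdl (ins j x t) & pk_seq (ins j x t) == k].
Definition Tm k t := \sum_(j < (size t).+1)
  [&& ~~ has_ddes (ins j x t), ~~ fdl (ins j x t) & pk_seq (ins j x t) == k].

Lemma notin_lt t : all (fun v => v < x) t -> x \notin t.
Proof. by move=> H; apply/negP => /(allP H); rewrite ltnn. Qed.

Lemma rest_pt (P : bool -> nat -> bool) a b r j :
  all (fun v => v < x) [:: a, b & r] -> uniq [:: a, b & r] -> ~~ has_ddes [:: a, b & r] ->
  let s := ins j.+2 x [:: a, b & r] in
  let u := ins j.+1 x (b :: r) in
  ~~ has_ddes s && P (fdl s) (pk_seq s) =
  ~~ has_ddes u && P (b < a) (des_seq u).
Proof.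
move=> Hx Hu Hd s u.
have Hs : s = [:: a, b & ins j x r] by rewrite /s !insS.
have Hu' : u = b :: ins j x r by rewrite /u insS.
have Hv : has_ddes s = has_ddes u by rewrite Hs Hu' (@dd_shift x a b r j Hx Hd).
rewrite Hv; case Hvu: (has_ddes u) => //=.
have Hus : uniq s by apply: uniq_ins => //; exact: notin_lt.
have := @pk_des s Hus (negbT (etrans Hv Hvu)).
rewrite Hs Hu' des_cons2 /= addnC => /addnI ->.
by [].
Qed.
End Y.

Lemma pt (c v : bool) D d k : D = d \/ D = d.+1 ->
  (v && (c && (D == k))) = c * ((d == k) * (v && (D == d + 0)) + (d.+1 == k) * (v && (D == d + 1))) :> nat.
Proof.
case=> ->; rewrite addn0 addn1 eqxx ?(ltn_eqF (ltnSn d)) ?(gtn_eqF (ltnSn d)) andbT andbF;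
  case: c; case: v => //=; rewrite ?muln0 ?muln1 ?mul1n ?addn0 ?add0n //.
Qed.

Lemma dd_tail {a b r} : ~~ has_ddes [:: a, b & r] -> ~~ has_ddes (b :: r).
Proof.
case: r => [|c r]; first by rewrite (@dd_small [:: b]).
by rewrite dd_cons3 negb_or => /andP[].
Qed.

Lemma fd_tail {a b r} : ~~ has_ddes [:: a, b & r] -> b < a -> ~~ fdl (b :: r).
Proof.
case: r => [|c r] //=.
rewrite dd_cons3 negb_or => /andP[H _] ba; apply/negP => cb.
by rewrite ba cb in H.
Qed.

Section Z.
Variable x : nat.

Lemma Tp_closed k a b r : let t := [:: a, b & r] in
  all (fun v => v < x) t -> uniq t -> ~~ has_ddes t ->
  Tp x k t + (fdl t && (des_seq t == k)) * (2 * k) =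
  (~~ fdl t && (des_seq t == k)) + (fdl t && (des_seq t == k.+1)) * k.+1
  + (fdl t && (des_seq t == k)) * size t.
Proof.
move=> t Hx Hu Hd; rewrite /Tp [size t]/=; rewrite (sum3 (fun j => [&& ~~ has_ddes (ins j x t), fdl (ins j x t) & pk_seq (ins j x t) == k])).
have ax : a < x by case/andP: Hx.
have Hx' : all (fun v => v < x) (b :: r) by case/andP: Hx.
have Hd' := dd_tail Hd.
have Hab := fd_tail Hd.
have [N0 N1] := @N_closed x (b :: r) isT Hx' Hd'.
rewrite (eq_bigr (fun j : 'I_(size r).+1 => (b < a) * ((des_seq (b :: r) == k) *
   (~~ has_ddes (ins j.+1 x (b :: r)) && (des_seq (ins j.+1 x (b :: r)) == des_seq (b :: r) + 0))
   + ((des_seq (b :: r)).+1 == k) *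
   (~~ has_ddes (ins j.+1 x (b :: r)) && (des_seq (ins j.+1 x (b :: r)) == des_seq (b :: r) + 1))))); last first.
  move=> j _; have := @rest_pt x (fun f p => f && (p == k)) a b r j Hx Hu Hd => /= ->.
  by apply: pt; apply: des_ins.
rewrite -big_distrr /= big_split /= -!big_distrr /=.
have -> : \sum_(i < (size r).+1)
   (~~ has_ddes (ins i.+1 x (b :: r)) && (des_seq (ins i.+1 x (b :: r)) == des_seq (b :: r) + 0))
   = N x 0 (b :: r) by [].
have -> : \sum_(i < (size r).+1)
   (~~ has_ddes (ins i.+1 x (b :: r)) && (des_seq (ins i.+1 x (b :: r)) == des_seq (b :: r) + 1))
   = N x 1 (b :: r) by [].
rewrite (gtF ax) andbF /= addn0.
have F0 : [&& ~~ has_ddes (ins 0 x t), a < x & pk_seq (ins 0 x t) == k]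
   = ~~ (b < a) && (des_seq t == k).
  rewrite ins0 /t dd_cons3 ax /= (negbTE Hd) orbF.
  case ba: (b < a) => //=.
  have Hs : uniq (x :: t) by rewrite cons_uniq Hu notin_lt.
  have := @pk_des (x :: t) Hs; rewrite /t dd_cons3 ax ba /= (negbTE Hd) des_cons2 ax.
  by rewrite addn1 add1n => /(_ isT) [->].
rewrite F0 N0 /t des_cons2 /=.
move: N1 Hab; rewrite /=.
case: (b < a) => /=; case: (fdl (b :: r)) => //= H1 H2;
  rewrite ?add0n ?add1n; repeat (case: eqP => /= ?); lia.
Qed.
Lemma Tm_closed k a b r : let t := [:: a, b & r] in
  all (fun v => v < x) t -> uniq t -> ~~ has_ddes t ->
  Tm x k t + (~~ fdl t && ((des_seq t).+1 == k)) * (2 * des_seq t + 1) =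
  (fdl t && (des_seq t == k)) + (~~ fdl t && (des_seq t == k)) * k.+1
  + (~~ fdl t && ((des_seq t).+1 == k)) * size t.
Proof.
move=> t Hx Hu Hd; rewrite /Tm [size t]/=; rewrite (sum3 (fun j => [&& ~~ has_ddes (ins j x t), ~~ fdl (ins j x t) & pk_seq (ins j x t) == k])).
have ax : a < x by case/andP: Hx.
have bx : b < x by case/and3P: Hx.
have Hx' : all (fun v => v < x) (b :: r) by case/andP: Hx.
have Hd' := dd_tail Hd.
have Hab := fd_tail Hd.
have [N0 N1] := @N_closed x (b :: r) isT Hx' Hd'.
rewrite (eq_bigr (fun j : 'I_(size r).+1 => (~~ (b < a)) * ((des_seq (b :: r) == k) *
   (~~ has_ddes (ins j.+1 x (b :: r)) && (des_seq (ins j.+1 x (b :: r)) == des_seq (b :: r) + 0))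
   + ((des_seq (b :: r)).+1 == k) *
   (~~ has_ddes (ins j.+1 x (b :: r)) && (des_seq (ins j.+1 x (b :: r)) == des_seq (b :: r) + 1))))); last first.
  move=> j _; have := @rest_pt x (fun f p => ~~ f && (p == k)) a b r j Hx Hu Hd => /= ->.
  by apply: pt; apply: des_ins.
rewrite -big_distrr /= big_split /= -!big_distrr /=.
have -> : \sum_(i < (size r).+1)
   (~~ has_ddes (ins i.+1 x (b :: r)) && (des_seq (ins i.+1 x (b :: r)) == des_seq (b :: r) + 0))
   = N x 0 (b :: r) by [].
have -> : \sum_(i < (size r).+1)
   (~~ has_ddes (ins i.+1 x (b :: r)) && (des_seq (ins i.+1 x (b :: r)) == des_seq (b :: r) + 1))
   = N x 1 (b :: r) by [].
rewrite ax /=.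
have F1 : [&& ~~ has_ddes (ins 1 x t), ~~ (x < a) & pk_seq (ins 1 x t) == k]
   = ~~ fdl (b :: r) && ((des_seq (b :: r)).+1 == k).
  have Hi : ins 1 x t = [:: a, x, b & r] by rewrite /t insS ins0.
  rewrite Hi dd_cons3 (gtF ax) /= (@ddx x b r Hx' Hd').
  have Hs : uniq [:: a, x, b & r] by rewrite -Hi; apply: uniq_ins => //; exact: notin_lt.
  have := @pk_des [:: a, x, b & r] Hs; rewrite dd_cons3 (gtF ax) /= (@ddx x b r Hx' Hd').
  rewrite !des_cons2 (gtF ax) bx addn0.
  move=> H; rewrite -[match r with [::] => false | b0 :: _ => b0 < b end]/(fdl (b :: r)).
  by case: (fdl (b :: r)) H => [//|/(_ isT) ->].
rewrite F1 N0 /t des_cons2 /=.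
move: N1 Hab; rewrite /=.
case: (b < a) => /=; case: (fdl (b :: r)) => //= H1 H2;
  rewrite ?add0n ?add1n; repeat (case: eqP => /= ?); lia.
Qed.
End Z.


Fixpoint E n : seq (seq nat) :=
  if n is m.+1 then [seq ins j m t | t <- E m, j <- iota 0 m.+1] else [:: [::]].

Lemma ins_rem x s : x \in s -> ins (index x s) x (rem x s) = s.
Proof.
elim: s => [|y s IH] //; rewrite inE => H /=.
case: (y =P x) => [->|ne]; first by rewrite ins0.
rewrite insS IH //; case/orP: H => // /eqP e; by case: ne.
Qed.

Lemma index_ins j x t : x \notin t -> j <= size t -> index x (ins j x t) = j.
Proof.
elim: t j => [|y t IH] [|j] //=; rewrite ?ins0 ?insS /= ?eqxx //.
rewrite inE negb_or => /andP[ne Hn] Hj.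
by rewrite eq_sym (negbTE ne) IH.
Qed.

Lemma rem_ins j x t : x \notin t -> rem x (ins j x t) = t.
Proof.
elim: t j => [|y t IH] [|j] //=; rewrite ?ins0 ?insS /= ?eqxx //.
rewrite inE negb_or => /andP[ne Hn].
by rewrite eq_sym (negbTE ne) IH.
Qed.

Lemma iotaS0 n : perm_eq (iota 0 n.+1) (n :: iota 0 n).
Proof. by rewrite -addn1 iotaD /= cats1 perm_rcons. Qed.

Lemma mem_E n s : (s \in E n) = perm_eq s (iota 0 n).
Proof.
elim: n s => [|n IH] s.
  by rewrite /= inE; apply/eqP/perm_nilP.
apply/allpairsPdep/idP.
  case=> t [j [Ht Hj ->]].
  by rewrite (permPl (perm_ins j n t)) (permPr (iotaS0 n)) perm_cons -IH.
move=> Hs.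
have nin : n \in s by rewrite (perm_mem Hs) mem_iota leq0n add0n ltnSn.
have Hr : perm_eq (rem n s) (iota 0 n).
  by rewrite -(perm_cons n) -(permPl (perm_to_rem nin)) -(permPr (iotaS0 n)).
exists (rem n s), (index n s); split; first by rewrite IH.
  by rewrite mem_iota /= add0n -(size_iota 0 n.+1) -(perm_size Hs) index_mem.
by rewrite ins_rem.
Qed.

Lemma notinE {n t} : t \in E n -> n \notin t.
Proof. by rewrite mem_E => /perm_mem ->; rewrite mem_iota ltnn andbF. Qed.

Lemma sizeE {n t} : t \in E n -> size t = n.
Proof. by rewrite mem_E => /perm_size ->; rewrite size_iota. Qed.

Lemma uniqE n : uniq (E n).
Proof.
elim: n => [|n IH] //.
apply: allpairs_uniq => //; first exact: iota_uniq.
move=> [t1 j1] [t2 j2] H1 H2; case/allpairsP: H1 => [[u1 i1] [Hu1 Hi1 [-> ->]]]; case/allpairsP: H2 => [[u2 i2] [Hu2 Hi2 [-> ->]]] /= H.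
have n1 := notinE Hu1; have n2 := notinE Hu2.
have l1 : i1 <= size u1 by rewrite (sizeE Hu1) -ltnS; move: Hi1; rewrite mem_iota.
have l2 : i2 <= size u2 by rewrite (sizeE Hu2) -ltnS; move: Hi2; rewrite mem_iota.
have e1 : i1 = i2 by rewrite -(@index_ins i1 n u1 n1 l1) H (@index_ins i2 n u2 n2 l2).
have e2 : u1 = u2 by rewrite -(@rem_ins i1 n u1 n1) H (@rem_ins i2 n u2 n2).
by rewrite e1 e2.
Qed.


Lemma word_inj n : injective (@word n).
Proof.
move=> p q H; apply/permP => i.
have /eq_in_map H' : [seq val (p i) | i <- enum 'I_n] = [seq val (q i) | i <- enum 'I_n] by [].
by apply: val_inj; apply: H'; rewrite mem_enum.
Qed.

Lemma word_perm n (p : {perm 'I_n}) : perm_eq (word p) (iota 0 n).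
Proof.
have -> : word p = map val (map p (enum 'I_n)) by rewrite -map_comp.
rewrite -val_enum_ord perm_map //.
apply: uniq_perm; first by rewrite map_inj_uniq ?enum_uniq //; apply: perm_inj.
  exact: enum_uniq.
move=> i; rewrite mem_enum inE; apply/mapP; exists (p^-1 i)%g; first by rewrite mem_enum.
by rewrite permKV.
Qed.

Lemma word_surj n s : perm_eq s (iota 0 n) -> exists p : {perm 'I_n}, word p = s.
Proof.
move=> Hs.
have Sz : size s = n by rewrite (perm_size Hs) size_iota.
have Lt : forall i : 'I_n, nth 0 s i < n.
  move=> i; have : nth 0 s i \in s by rewrite mem_nth // Sz.
  by rewrite (perm_mem Hs) mem_iota.
pose f (i : 'I_n) := insubd i (nth 0 s i).
have Hf : forall i, val (f i) = nth 0 s i by move=> i; rewrite val_insubd Lt.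
have Hu : uniq s by rewrite (perm_uniq Hs) iota_uniq.
have finj : injective f.
  move=> i j /(congr1 val); rewrite !Hf => /eqP; rewrite nth_uniq ?Sz // => /eqP H.
  exact: val_inj.
exists (perm finj); rewrite /word.
rewrite (eq_map (fun i => congr1 val (permE finj i))) (eq_map Hf).
have -> : [seq nth 0 s i | i : 'I_n <- enum 'I_n] = map (nth 0 s) (map val (enum (ordinal n))) by rewrite -map_comp.
by rewrite val_enum_ord -{1}Sz -/(mkseq (nth 0 s) (size s)) mkseq_nth.
Qed.

Lemma perm_wordE n : perm_eq [seq word p | p <- index_enum {perm 'I_n}] (E n).
Proof.
apply: uniq_perm; first by rewrite map_inj_uniq ?index_enum_uniq //; apply: word_inj.
  exact: uniqE.
move=> s; rewrite mem_E; apply/mapP/idP.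
  by case=> p _ ->; apply: word_perm.
by case/word_surj => p <-; exists p; rewrite ?mem_index_enum.
Qed.

Lemma card_word n (P : pred (seq nat)) :
  #|[set p : {perm 'I_n} | P (word p)]| = \sum_(s <- E n) P s.
Proof.
rewrite -sum1dep_card big_mkcond /=.
rewrite -(big_map (@word n) predT (fun s => if P s then 1 else 0)).
rewrite (perm_big _ (perm_wordE n)); apply: eq_bigr => s _.
by case: (P s).
Qed.


Definition ssl n (s : seq nat) := [forall k : 'I_n, ~~ has_ddes [seq v <- s | v < k.+1]].

Lemma filter_ins (p : pred nat) j x t : ~~ p x -> filter p (ins j x t) = filter p t.
Proof. by move=> H; rewrite /ins filter_cat /= (negbTE H) -filter_cat cat_take_drop. Qed.

Lemma allE {n t} : t \in E n -> all (fun v => v < n) t.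
Proof. by rewrite mem_E => /perm_mem Hm; apply/allP => v; rewrite Hm mem_iota. Qed.

Lemma all_ins {n} j {t} : t \in E n -> all (fun v => v < n.+1) (ins j n t).
Proof.
move=> Ht; apply/allP => v; rewrite (perm_mem (perm_ins j n t)) inE => /orP[/eqP -> //|].
by move/(allP (allE Ht)) => /ltnW.
Qed.

Lemma ssl_ins {n} j {t} : t \in E n -> ssl n.+1 (ins j n t) = ssl n t && ~~ has_ddes (ins j n t).
Proof.
move=> Ht; apply/forallP/andP.
  move=> H; split.
    apply/forallP => k; have := H (widen_ord (leqnSn n) k).
    by rewrite /= filter_ins // -leqNgt.
  have := H ord_max; rewrite /=.
  by have /all_filterP -> := all_ins j Ht.
case=> /forallP H1 H2 k.
case: (ltngtP k n) => Hk.
- have := H1 (Ordinal Hk); rewrite /= filter_ins //; by rewrite -leqNgt.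
- by have := ltn_ord k; rewrite ltnS leqNgt Hk.
- by have /all_filterP := all_ins j Ht; rewrite Hk => ->.
Qed.

Lemma ssl_dd {n s} : s \in E n.+1 -> ssl n.+1 s -> ~~ has_ddes s.
Proof.
move=> Hs /forallP /(_ ord_max) /=.
by have /all_filterP -> := allE Hs.
Qed.

Lemma sum_ins n (F : seq nat -> nat) :
  \sum_(s <- E n.+1) F s = \sum_(t <- E n) \sum_(j < (size t).+1) F (ins j n t).
Proof.
have -> : E n.+1 = [seq ins j n t | t <- E n, j <- iota 0 n.+1] by [].
rewrite big_allpairs_dep big_seq_cond [RHS]big_seq_cond.
apply: eq_bigr => t /andP[Ht _].
have -> : iota 0 n.+1 = index_iota 0 n.+1 by rewrite /index_iota subn0.
by rewrite (sizeE Ht) big_mkord.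

Qed.

Definition Acnt m k := \sum_(t <- E m) [&& ssl m t, ~~ fdl t & des_seq t == k].
Definition Bcnt m k := \sum_(t <- E m) [&& ssl m t, fdl t & des_seq t == k].
Definition Scnt m k := \sum_(t <- E m) (ssl m t && (des_seq t == k)).

Lemma Snk_S m k : Snk m k = Scnt m k.
Proof. by rewrite /Snk (@card_word m (fun s => ssl m s && (des_seq s == k))). Qed.

Lemma S_AB m k : Scnt m k = Acnt m k + Bcnt m k.
Proof. by rewrite /Scnt -big_split; apply: eq_bigr => t _; case: (ssl m t); case: (fdl t); rewrite /= ?addn0 ?add0n. Qed.

Lemma fd_nth s : 1 < size s -> (nth 0 s 1 < nth 0 s 0) = fdl s.
Proof. by case: s => [|a [|b s]]. Qed.

Lemma fa_nth s : uniq s -> 1 < size s -> (nth 0 s 0 < nth 0 s 1) = ~~ fdl s.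
Proof.
case: s => [|a [|b s]] //= /andP[]; rewrite inE negb_or => /andP[ab _] _ _.
by case: (ltngtP a b) => //= e; rewrite e eqxx in ab.
Qed.

Lemma uniq_memE {n t} : t \in E n -> uniq t.
Proof. by rewrite mem_E => /perm_uniq ->; apply: iota_uniq. Qed.

Lemma size_ins j x t : size (ins j x t) = (size t).+1.
Proof. by rewrite (perm_size (perm_ins j x t)). Qed.

Lemma pk_fd {n s} k : s \in E n.+1 -> ssl n.+1 s ->
  (fdl s && (pk_seq s == k)) = (fdl s && (des_seq s == k.+1)) /\
  (~~ fdl s && (pk_seq s == k)) = (~~ fdl s && (des_seq s == k)).
Proof.
move=> Hs Hss; have := @pk_des s (uniq_memE Hs) (ssl_dd Hs Hss).
by case: (fdl s) => /= <-; rewrite ?addn1 ?addn0 ?eqSS.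
Qed.

Lemma Pplus_B m k : 1 < m -> Pplus m k = Bcnt m k.+1.
Proof.
case: m => [|m] // Hm.
rewrite /Pplus (@card_word m.+1 (fun s => [&& ssl m.+1 s, nth 0 s 1 < nth 0 s 0 & pk_seq s == k])).
rewrite /Bcnt big_seq [RHS]big_seq; apply: eq_bigr => s Hs.
rewrite fd_nth ?(sizeE Hs) //.
case Hss: (ssl m.+1 s) => //=.
by have [-> _] := pk_fd k Hs Hss.
Qed.

Lemma Pminus_A m k : 1 < m -> Pminus m k = Acnt m k.
Proof.
case: m => [|m] // Hm.
rewrite /Pminus (@card_word m.+1 (fun s => [&& ssl m.+1 s, nth 0 s 0 < nth 0 s 1 & pk_seq s == k])).
rewrite /Acnt big_seq [RHS]big_seq; apply: eq_bigr => s Hs.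
rewrite fa_nth ?(sizeE Hs) ?(uniq_memE Hs) //.
case Hss: (ssl m.+1 s) => //=.
by have [_ ->] := pk_fd k Hs Hss.
Qed.


Lemma sum_Tp m k : 0 < m ->
  \sum_(s <- E m.+1) [&& ssl m.+1 s, nth 0 s 1 < nth 0 s 0 & pk_seq s == k]
  = \sum_(t <- E m) ssl m t * Tp m k t.
Proof.
move=> Hm; rewrite sum_ins big_seq [RHS]big_seq; apply: eq_bigr => t Ht.
rewrite /Tp big_distrr; apply: eq_bigr => j _.
rewrite ssl_ins // fd_nth ?size_ins ?(sizeE Ht) //.
by case: (ssl m t); rewrite /= ?mul1n.
Qed.

Lemma sum_Tm m k : 0 < m ->
  \sum_(s <- E m.+1) [&& ssl m.+1 s, nth 0 s 0 < nth 0 s 1 & pk_seq s == k]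
  = \sum_(t <- E m) ssl m t * Tm m k t.
Proof.
move=> Hm; rewrite sum_ins big_seq [RHS]big_seq; apply: eq_bigr => t Ht.
rewrite /Tm big_distrr; apply: eq_bigr => j _.
rewrite ssl_ins // fa_nth ?size_ins ?(sizeE Ht) //; last first.
  by apply: uniq_ins; [apply: notinE Ht|apply: uniq_memE Ht].
by case: (ssl m t); rewrite /= ?mul1n.
Qed.

Lemma rec_plus m k : 1 < m ->
  Pplus m.+1 k + Bcnt m k * (2 * k) = Acnt m k + Bcnt m k.+1 * k.+1 + Bcnt m k * m.
Proof.
move=> Hm.
rewrite /Pplus (@card_word m.+1 (fun s => [&& ssl m.+1 s, nth 0 s 1 < nth 0 s 0 & pk_seq s == k])).
rewrite sum_Tp ?(ltnW Hm) //.
rewrite /Acnt /Bcnt !big_distrl -!big_split /=; apply: eq_big_seq => t Ht.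
case Hss: (ssl m t) => /=; last by rewrite !mul0n.
rewrite mul1n.
case: m Hm Ht Hss => [|m] // Hm Ht Hss.
have Sz := sizeE Ht.
case: t Ht Hss Sz => [|a [|b r]] Ht Hss Sz; try by rewrite -Sz in Hm.
have := @Tp_closed m.+1 k a b r (allE Ht) (uniq_memE Ht) (ssl_dd Ht Hss).
by rewrite Sz.
Qed.

Lemma rec_minus m k : 1 < m ->
  Pminus m.+1 k + (if k is k'.+1 then Acnt m k' * (2 * k' + 1) else 0) =
  Bcnt m k + Acnt m k * k.+1 + (if k is k'.+1 then Acnt m k' * m else 0).
Proof.
move=> Hm.
rewrite /Pminus (@card_word m.+1 (fun s => [&& ssl m.+1 s, nth 0 s 0 < nth 0 s 1 & pk_seq s == k])).
rewrite sum_Tm ?(ltnW Hm) //.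
case: k => [|k].
  rewrite !addn0 /Acnt /Bcnt !big_distrl -!big_split /=; apply: eq_big_seq => t Ht.
  case Hss: (ssl m t) => /=; last by rewrite !mul0n.
  rewrite mul1n.
  case: m Hm Ht Hss => [|m] // Hm Ht Hss.
  have Sz := sizeE Ht.
  case: t Ht Hss Sz => [|a [|b r]] Ht Hss Sz; try by rewrite -Sz in Hm.
  have := @Tm_closed m.+1 0 a b r (allE Ht) (uniq_memE Ht) (ssl_dd Ht Hss).
  by rewrite /= !andbF /= ?muln0 ?addn0 => ->.
rewrite /Acnt /Bcnt !big_distrl -!big_split /=; apply: eq_big_seq => t Ht.
case Hss: (ssl m t) => /=; last by rewrite !mul0n.
rewrite mul1n.
case: m Hm Ht Hss => [|m] // Hm Ht Hss.
have Sz := sizeE Ht.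
case: t Ht Hss Sz => [|a [|b r]] Ht Hss Sz; try by rewrite -Sz in Hm.
have := @Tm_closed m.+1 k.+1 a b r (allE Ht) (uniq_memE Ht) (ssl_dd Ht Hss).
rewrite Sz eqSS; case: (des_seq [:: a, b & r] =P k) => [->|_]; rewrite ?andbF //=.
Qed.


Lemma ssl_small n s : size s <= 2 -> ssl n s.
Proof.
move=> Hs; apply/forallP => k; rewrite dd_small //.
by rewrite size_filter (leq_trans (count_size _ _) Hs).
Qed.

Lemma base k : Pplus 2 k + 2 * k * Snk 1 k = 1 * Snk 1 k /\ Pminus 2 k = k.+1 * Snk 1 k.
Proof.
rewrite Pplus_B // Pminus_A // Snk_S /Bcnt /Acnt /Scnt /=.
rewrite !big_cons !big_nil !ssl_small //=.
rewrite !des_cons2 !des_1 /=.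
by case: k => [|k] //=; rewrite !muln0.
Qed.

Lemma main_nat n : 0 < n -> forall k,
  Pplus n.+1 k + 2 * k * Snk n k = n * Snk n k /\ Pminus n.+1 k = k.+1 * Snk n k.
Proof.
elim: n => [|n IH] // _.
case: n IH => [|n] IH; first exact: base.
move=> k.
have {}IH := IH isT.
rewrite Snk_S S_AB.
have Ak : forall k', Acnt n.+2 k' = k'.+1 * Snk n.+1 k'.
  by move=> k'; rewrite -Pminus_A //; case: (IH k').
have Bk : forall k', Bcnt n.+2 k'.+1 + 2 * k' * Snk n.+1 k' = n.+1 * Snk n.+1 k'.
  by move=> k'; rewrite -Pplus_B //; case: (IH k').
split.
  have R := @rec_plus n.+2 k isT.
  have e2 := Ak k; have e3 := Bk k.
  nia.
have R := @rec_minus n.+2 k isT.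
case: k R => [|k] /= R; first lia.
have e2 := Ak k; have e3 := Bk k.
rewrite /= in R.
nia.
Qed.


Import GRing.Theory.
Local Open Scope ring_scope.

Lemma fin_int (P M S n k : nat) : (P + 2 * k * S = n * S)%N -> (M = k.+1 * S)%N ->
  (P)%:Z = ((n%:Z - 2 * k%:Z) * (S)%:Z)%R /\
  (M)%:Z = ((1 + k%:Z) * (S)%:Z)%R.
Proof.
move=> H1 H2; split.
  have := congr1 Posz H1; rewrite PoszD !PoszM => E.
  by rewrite mulrBl -E addrK.
by rewrite H2 PoszM -add1n PoszD.
Qed.

Theorem lemma5 (n k : nat) : (1 <= n)%N ->
  (Pplus n.+1 k)%:Z = ((n%:Z - 2 * k%:Z) * (Snk n k)%:Z)%R /\
  (Pminus n.+1 k)%:Z = ((1 + k%:Z) * (Snk n k)%:Z)%R.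
Proof.
move=> Hn; have [H1 H2] := @main_nat n Hn k.
exact: fin_int H1 H2.
Qed.
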